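(* Let $X$ be the compact Kähler toric manifold with moment polytope the Delzant polytope $\Delta\subset\mathbb{R}^n$, $\Phi:X\to\Delta$ its moment map, $\nu$ its Liouville measure, and $L\to X$ its prequantum Hermitian holomorphic line bundle, as described in the context. For a lattice point $k\in\mathbb{Z}^n\cap\Delta$ and $N\in\mathbb{Z}_+$ let $s_{Nk}$ be a unit-norm holomorphic section of $L^{N}$ spanning the (one-dimensional) weight space of weight $Nk$, and let $\mu_{Nk}=\langle s_{Nk},s_{Nk}\rangle\,\nu$. Then for every $f\in C^\infty(\Delta)$, $$\int_X \Phi^*f\ d\mu_{Nk}\ \sim\ \Big(\sum_{i=0}^\infty P_i(x,D)f\ N^{-i}\Big)\Big|_{x=k}\qquad(N\to\infty),$$ where $P_i(x,D)$ are the differential operators (of order $2i$, $P_0=I$) described in the context.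
   Context: $\Delta=\{x\in\mathbb{R}^n:\ \ell_i(x)=c_i-\langle u_i,x\rangle\ge0,\ i=1,\dots,d\}$ is a compact $n$-dimensional Delzant polytope ($u_i$ primitive integer outward normals, $c_i\in\mathbb{Z}$, each vertex on exactly $n$ facets whose normals form a $\mathbb{Z}$-basis); $\ell_i$ is the lattice distance to the $i$-th facet. $X$ is obtained from $\Delta$ by the Delzant construction: the symplectic (Kähler) reduction of $\mathbb{C}^d$ with Kähler form $\sqrt{-1}\sum dz_i\wedge d\bar z_i$ by a codimension-$n$ subtorus $G$ of $T=(S^1)^d$ acting diagonally; $X$ carries the residual Hamiltonian action of the $n$-torus $K=T/G$ with moment map $\Phi$ (induced by $z\mapsto(|z_1|^2,\dots,|z_d|^2)$), with $\Phi(X)=\Delta$ and $\Phi_*\nu$ equal to Lebesgue measure on $\Delta$ (under the affine identification in which the $\ell_i$ are the coordinate functions $x_i$). $L$ is the reduction of the trivial line bundle over $\mathbb{C}^d$ with Hermitian metric $\langle s,s\rangle=e^{-|z|^2}$ for the constant section $s$; its curvature is minus the Kähler form. The space of holomorphic sections of $L^N$ splits into one-dimensional $K$-weight spaces indexed by the lattice points of $N\Delta$, and the unit section of weight $m$ satisfies $\langle s_m,s_m\rangle=\Phi^*\big(E_N(m/N,\cdot)\big)/\int_\Delta E_N(m/N,y)\,dy$, where $E_N(x,y)=\prod_i\ell_i(y)^{N\ell_i(x)}e^{-N\ell_i(y)}$ ($0^0=1$). The operators $P_i(x,D)$ are the differential operators on $C^\infty(\Delta)$, of order $2i$ with $P_0=I$,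 characterized by the asymptotic expansion $\int_\Delta K_N(x,y)f(y)\,dy\sim\sum_i (P_i(x,D)f)(x)N^{-i}$ for all $f\in C^\infty(\Delta)$, $x\in\Delta$, where $K_N(x,y)=E_N(x,y)/\int_\Delta E_N(x,y')\,dy'$. *)

(* Defs.v *)
From HB Require Import structures.
From mathcomp Require Import all_boot all_order all_algebra.
From mathcomp Require Import all_classical all_reals all_analysis.
Set Implicit Arguments. Unset Strict Implicit. Unset Printing Implicit Defensive.
Import Order.TTheory GRing.Theory Num.Theory.
Import numFieldNormedType.Exports.
Local Open Scope classical_set_scope.
Local Open Scope ring_scope.

Section Toric.
Variable R : realType.

(* u i j = j-th coordinate of the i-th (integer) normal, c i in Z. *)

Definition ell (n d : nat) (u : 'I_d -> 'I_n -> int) (c : 'I_d -> int)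
  (i : 'I_d) (x : 'rV[R]_n) : R :=
  (c i)%:~R - \sum_(j < n) (u i j)%:~R * x ord0 j.

Definition polytope (n d : nat) (u : 'I_d -> 'I_n -> int) (c : 'I_d -> int)
  : set 'rV[R]_n := [set x | forall i, 0 <= ell u c i x].

Definition is_vertex (n d : nat) (u : 'I_d -> 'I_n -> int) (c : 'I_d -> int)
  (v : 'rV[R]_n) : Prop :=
  polytope u c v /\
  ~ (exists a b, polytope u c a /\ polytope u c b /\ a <> b /\
        v = 2^-1 *: (a + b)).

Definition active (n d : nat) (u : 'I_d -> 'I_n -> int) (c : 'I_d -> int)
  (v : 'rV[R]_n) : {set 'I_d} := [set i | ell u c i v == 0].

Definition Zbasis (n d : nat) (u : 'I_d -> 'I_n -> int) (I : {set 'I_d}) : Prop :=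
  forall z : 'I_n -> int, exists! a : 'I_d -> int,
    (forall i, i \notin I -> a i = 0) /\
    forall j, z j = \sum_(i in I) a i * u i j.

Definition primitive (n : nat) (w : 'I_n -> int) : Prop :=
  forall m : int, (forall j, (m %| w j)%Z) -> `|m| = 1.

Definition Delzant (n d : nat) (u : 'I_d -> 'I_n -> int) (c : 'I_d -> int) : Prop :=
  [/\ (* compact (closed by definition, and bounded) *)
      exists M : R, forall x, polytope u c x -> forall j, `|x ord0 j| <= M,
      (* n-dimensional *)
      exists x : 'rV[R]_n, forall i, 0 < ell u c i x,
      (* each ell_i cuts out a facet (irredundant description) *)
      forall i, exists x : 'rV[R]_n,
        ell u c i x = 0 /\ forall j, j != i -> 0 < ell u c j x,
      forall i, primitive (u i) &
      forall v, is_vertex u c v ->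
        #|active u c v| = n /\ Zbasis u (active u c v)].

Fixpoint iint (n : nat) : ('rV[R]_n -> R) -> R :=
  match n return ('rV[R]_n -> R) -> R with
  | 0 => fun g => g 0
  | n'.+1 => fun g =>
      Rintegral (@lebesgue_measure R) setT
        (fun t : R => iint (fun y : 'rV[R]_n' =>
             g (row_mx (const_mx t : 'rV[R]_1) y : 'rV[R]_n'.+1)))
  end.

Definition intDelta (n d : nat) (u : 'I_d -> 'I_n -> int) (c : 'I_d -> int)
  (g : 'rV[R]_n -> R) : R :=
  iint (fun y => if `[< polytope u c y >] then g y else 0).

(* E_N(x,y) = prod_i ell_i(y)^(N ell_i(x)) e^(-N ell_i(y))   (0^0 = 1) *)
Definition EN (n d : nat) (u : 'I_d -> 'I_n -> int) (c : 'I_d -> int)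
  (N : nat) (x y : 'rV[R]_n) : R :=
  \prod_(i < d) (powR (ell u c i y) (N%:R * ell u c i x)
                 * expR (- (N%:R * ell u c i y))).

Definition KN (n d : nat) (u : 'I_d -> 'I_n -> int) (c : 'I_d -> int)
  (N : nat) (x y : 'rV[R]_n) : R :=
  EN u c N x y / intDelta u c (EN u c N x).

Definition iterD (n : nat) (s : seq 'I_n) (f : 'rV[R]_n -> R) : 'rV[R]_n -> R :=
  foldr (fun j g => 'D_(delta_mx ord0 j : 'rV[R]_n) g) f s.

Definition smooth (n : nat) (f : 'rV[R]_n -> R) : Prop :=
  forall (s : seq 'I_n) (x : 'rV[R]_n), differentiable (iterD s f) x.

Definition diffop_le (n : nat) (m : nat)
  (Q : ('rV[R]_n -> R) -> ('rV[R]_n -> R)) : Prop :=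
  exists (L : seq (seq 'I_n)) (a : seq 'I_n -> 'rV[R]_n -> R),
    all (fun s => size s <= m)%N L /\
    forall f, smooth f -> forall x, Q f x = \sum_(s <- L) a s x * iterD s f x.

Definition asymp (a : nat -> R) (cf : nat -> R) : Prop :=
  forall M : nat, exists C : R, exists N0 : nat, forall N : nat,
    (0 < N)%N -> (N0 <= N)%N ->
    `|a N - \sum_(i < M) cf i / (N%:R ^+ i)| <= C / (N%:R ^+ M).

End Toric.

(* Main.v *)
Require Import Defs.
From HB Require Import structures.
From mathcomp Require Import all_boot all_order all_algebra.
From mathcomp Require Import all_classical all_reals all_analysis.
Import Order.TTheory GRing.Theory Num.Theory.
Import numFieldNormedType.Exports.
Local Open Scope classical_set_scope.
Local Open Scope ring_scope.
Lemma hpow_cont (R : realType) (p : R) : 0 <= p ->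
  continuous (fun y : R => powR (Num.max y 0) p).
Proof.
rewrite le_eqVlt => /predU1P[<-|p0].
  under eq_fun do rewrite powRr0. by move=> x; exact: cvg_cst.
move=> x; rewrite /continuous_at /=.
have [x0|x0|->] := ltgtP x 0.
- have E : {near x, (fun _ => 0 : R) =1 (fun y : R => powR (Num.max y 0) p)}.
    near=> y. have : y < 0 by near: y; exact: lt_nbhsl.
    by move=> y0; rewrite max_r ?ltW // powR0 // gt_eqF.
  rewrite powR0 ?gt_eqF //.
  apply: cvg_trans (near_eq_cvg E) _; exact: cvg_cst.
- have E : {near x, (fun y => powR y p) =1 (fun y : R => powR (Num.max y 0) p)}.
    near=> y. have : 0 < y by near: y; exact: lt_nbhsr.
    by move=> y0; rewrite max_l ?ltW.
  apply: cvg_trans (near_eq_cvg E) _.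
  have D : differentiable (fun y : R => powR y p) x.
    by apply/derivable1_diffP; apply: derivable_powR; rewrite in_itv /= x0.
  exact: (differentiable_continuous D).
- have -> : (0:R) `^ p = (fun y : R => Num.max y 0 `^ p) 0 by rewrite /= maxxx.
  apply/left_right_continuousP; rewrite /= maxxx powR0 ?gt_eqF //; split.
  + have E : {near 0^'-, (fun _ => 0 : R) =1 (fun y : R => powR (Num.max y 0) p)}.
      near=> y. have : y < 0 by near: y; exact: nbhs_left_lt.
      by move=> y0; rewrite max_r ?ltW // powR0 // gt_eqF.
    apply: cvg_trans (near_eq_cvg E) _; exact: cvg_cst.
  + have E : {near 0^'+, (fun y => powR y p) =1 (fun y : R => powR (Num.max y 0) p)}.
      near=> y. have : 0 < y by near: y; exact: nbhs_right_gt.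
      by move=> y0; rewrite max_l ?ltW.
    apply: cvg_trans (near_eq_cvg E) _; exact: powR_cvg0.
Unshelve. all: by end_near. Qed.

Lemma cont_prod (R : realType) (T : topologicalType) (I : Type) (s : seq I)
  (F : I -> T -> R) : (forall i, continuous (F i)) ->
  continuous (fun y => \prod_(i <- s) F i y).
Proof.
move=> HF; elim: s => [|a s IH].
  have -> : (fun y => \prod_(i <- [::]) F i y) = (fun _ => 1 : R).
    by apply/funext => z; rewrite big_nil.
  by move=> y; exact: cvg_cst.
have -> : (fun y => \prod_(i <- a :: s) F i y) =
          (fun y => F a y * \prod_(i <- s) F i y).
  by apply/funext => z; rewrite big_cons.
move=> y; apply: cvgM; [exact: HF | exact: IH].
Qed.

Lemma cont_sum (R : realType) (T : topologicalType) (I : Type) (s : seq I)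
  (F : I -> T -> R) : (forall i, continuous (F i)) ->
  continuous (fun y => \sum_(i <- s) F i y).
Proof.
move=> HF; elim: s => [|a s IH].
  have -> : (fun y => \sum_(i <- [::]) F i y) = (fun _ => 0 : R).
    by apply/funext => z; rewrite big_nil.
  by move=> y; exact: cvg_cst.
have -> : (fun y => \sum_(i <- a :: s) F i y) =
          (fun y => F a y + \sum_(i <- s) F i y).
  by apply/funext => z; rewrite big_cons.
move=> y; apply: cvgD; [exact: HF | exact: IH].
Qed.

Lemma cont_B (R : realType) (T : topologicalType) (f g : T -> R) :
  continuous f -> continuous g -> continuous (fun y => f y - g y).
Proof. by move=> hf hg y; apply: cvgB; [exact: hf | exact: hg]. Qed.

Lemma cont_M (R : realType) (T : topologicalType) (f g : T -> R) :
  continuous f -> continuous g -> continuous (fun y => f y * g y).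
Proof. by move=> hf hg y; apply: cvgM; [exact: hf | exact: hg]. Qed.

Lemma cont_C (R : realType) (T : topologicalType) (a : R) :
  continuous (fun _ : T => a).
Proof. by move=> y; exact: cvg_cst. Qed.

Lemma expN_cont (R : realType) (a : R) : continuous (fun t : R => expR (- (a * t))).
Proof.
move=> t.
have h1 : {for t, continuous (fun t : R => - (a * t))}.
  by apply: cvgN; apply: cvgM; [exact: cvg_cst | exact: cvg_id].
exact: (continuous_comp h1 (@continuous_expR R _)).
Qed.

Lemma ell_cont (R : realType) (n d : nat) (u : 'I_d -> 'I_n -> int)
  (c : 'I_d -> int) (i : 'I_d) : continuous (ell (R:=R) u c i).
Proof.
rewrite /ell; apply: cont_B; first exact: cont_C.
apply: (@cont_sum _ _ _ _ (fun j (z : 'rV[R]_n) => (u i j)%:~R * z ord0 j)).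
move=> j; apply: cont_M; first exact: cont_C.
move=> z; exact: (@coord_continuous R 1 n ord0 j z).
Qed.
Theorem mainTheorem2 (R : realType) (n d : nat)
  (u : 'I_d -> 'I_n -> int) (c : 'I_d -> int)
  (hDelzant : Delzant R u c)
  (* the toric manifold X, seen as a measure space with Liouville measure nu *)
  (dX : measure_display) (X : measurableType dX)
  (nu : {measure set X -> \bar R})
  (* moment map, with Phi(X) = Delta and Phi_* nu = Lebesgue measure on Delta *)
  (Phi : X -> 'rV[R]_n)
  (hPhiImage : Phi @` setT = polytope (R:=R) u c)
  (hPhiPush : forall g : 'rV[R]_n -> R,
      {within polytope (R:=R) u c, continuous g} ->
      nu.-integrable setT (fun p => (g (Phi p))%:E) /\
      Rintegral nu setT (fun p => g (Phi p)) = intDelta u c g)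
  (* rho N k = <s_{Nk}, s_{Nk}> for the unit section of weight Nk of L^N *)
  (rho : nat -> 'rV[int]_n -> X -> R)
  (hrho : forall (N : nat) (k : 'rV[int]_n), (0 < N)%N ->
      polytope (R:=R) u c (map_mx (fun z : int => z%:~R) k) ->
      forall p, rho N k p =
        EN u c N (map_mx (fun z : int => z%:~R) k) (Phi p)
        / intDelta u c (EN u c N (map_mx (fun z : int => z%:~R) k)))
  (* the operators P_i of the context *)
  (P : nat -> ('rV[R]_n -> R) -> ('rV[R]_n -> R))
  (hP0 : forall f, smooth f -> forall x, P 0%N f x = f x)
  (hPord : forall i, diffop_le (2 * i) (P i))
  (hPchar : forall f, smooth f -> forall x, polytope (R:=R) u c x ->
      asymp (fun N => intDelta u c (fun y => KN u c N x y * f y))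
            (fun i => P i f x)) :
  forall (k : 'rV[int]_n), polytope (R:=R) u c (map_mx (fun z : int => z%:~R) k) ->
  forall f : 'rV[R]_n -> R, smooth f ->
    asymp (fun N => Rintegral nu setT (fun p => f (Phi p) * rho N k p))
          (fun i => P i f (map_mx (fun z : int => z%:~R) k)).
Proof.
move=> k hk f hf.
set x := map_mx (fun z : int => z%:~R) k.
have fc : continuous f.
  by move=> y; exact: (differentiable_continuous (hf [::] y)).
have Eq : forall N, (0 < N)%N ->
  Rintegral nu setT (fun p => f (Phi p) * rho N k p) =
  intDelta u c (fun y => KN u c N x y * f y).
  move=> N N0.
  set Z := intDelta u c (EN u c N x).
  pose g' := fun y : 'rV[R]_n => f y * ((\prod_(i < d)
     (powR (Num.max (ell u c i y) 0) (N%:R * ell u c i x)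
       * expR (- (N%:R * ell u c i y)))) / Z).
  have g'c : continuous g'.
    apply: cont_M; first exact: fc.
    apply: cont_M; last exact: cont_C.
    apply: (@cont_prod _ _ _ _ (fun i (z : 'rV[R]_n) =>
      powR (Num.max (ell u c i z) 0) (N%:R * ell u c i x)
       * expR (- (N%:R * ell u c i z)))).
    move=> i; apply: cont_M => z.
      apply: (@continuous_comp _ _ _ (ell u c i)
        (fun t => powR (Num.max t 0) (N%:R * ell u c i x))).
        exact: ell_cont.
      apply: hpow_cont; apply: mulr_ge0 => //; exact: hk.
    apply: (@continuous_comp _ _ _ (ell u c i) (fun t => expR (- (N%:R * t)))).
      exact: ell_cont.
    exact: expN_cont.
  have [_ HP] := hPhiPush g' (continuous_subspaceT g'c).
  have onP : forall y, polytope (R:=R) u c y -> g' y = KN u c N x y * f y.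
    move=> y Py; rewrite /g' /KN /EN mulrC; congr (_ / _ * _).
    by apply: eq_bigr => i _; rewrite max_l //; exact: Py.
  transitivity (Rintegral nu setT (fun p => g' (Phi p))).
    apply: eq_Rintegral => p _.
    have Pp : polytope (R:=R) u c (Phi p) by rewrite -hPhiImage; exists p.
    rewrite (onP _ Pp) (hrho N k N0 hk p) /KN; exact: mulrC.
  rewrite HP /intDelta; congr iint; apply/funext => y.
  case: asboolP => // Py; exact: onP.
move=> M; have [C [N0 H]] := hPchar f hf x hk M.
exists C, N0 => N NP NN; rewrite Eq //; exact: H.
Qed.
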